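(* Let $N, M_1, M_2, P, R_1, R_2, \widetilde{M}_2, \widetilde{P}$ be positive integers with $\widetilde{M}_2 \le M_2$, $\widetilde{P}\le P$. Let $\mathbf{y}\in\mathbb{C}^N$, $\mathbf{H}\in\mathbb{C}^{N\times M_1}$ and $\mathcal{M}\in\mathbb{R}^{N\times M_2\times P}$ be as in the context. Let $\mathbf{U}_2\in\mathbb{R}^{M_2\times\widetilde{M}_2}$ and $\mathbf{U}_3\in\mathbb{R}^{P\times\widetilde{P}}$ have orthonormal columns, and set $\widetilde{\mathcal{M}}=\mathcal{M}\times_2\mathbf{U}_2^\top\times_3\mathbf{U}_3^\top$ and $\widehat{\mathcal{M}}=\mathcal{M}\times_2\mathbf{U}_2\mathbf{U}_2^\top\times_3\mathbf{U}_3\mathbf{U}_3^\top$. Suppose $(\mathbf{A}^\star,\mathcal{B}^\star,\mathbf{C}^\star)$, with $\mathbf{A}^\star\in\mathbb{C}^{M_1\times R_1}$, $\mathcal{B}^\star\in\mathbb{C}^{R_1\times M_2\times R_2}$, $\mathbf{C}^\star\in\mathbb{C}^{R_2\times P}$, attains $$m_{\mathrm{TT}}:=\min_{\mathbf{A},\mathcal{B},\mathbf{C}}\Big\|\mathbf{y}-\sum_{r_1=1}^{R_1}\sum_{r_2=1}^{R_2} \mathbf{H}\mathbf{A}_{:r_1}\odot\big(\mathcal{M}\times_2\mathcal{B}_{r_1:r_2}\times_3\mathbf{C}_{r_2:}\big)\Big\|_F$$ over $\mathbf{A}\in\mathbb{C}^{M_1\times R_1},\mathcal{B}\in\mathbb{C}^{R_1\times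 M_2\times R_2},\mathbf{C}\in\mathbb{C}^{R_2\times P}$. Then $$\inf_{\substack{\mathbf{A}\in\mathbb{C}^{M_1\times R_1}\\ \widetilde{\mathcal{B}}\in\mathbb{C}^{R_1\times\widetilde{M}_2\times R_2}\\ \widetilde{\mathbf{C}}\in\mathbb{C}^{R_2\times\widetilde{P}}}}\Big\|\mathbf{y}-\sum_{r_1=1}^{R_1}\sum_{r_2=1}^{R_2} \mathbf{H}\mathbf{A}_{:r_1}\odot\big(\widetilde{\mathcal{M}}\times_2\widetilde{\mathcal{B}}_{r_1:r_2}\times_3\widetilde{\mathbf{C}}_{r_2:}\big)\Big\|_F \le m_{\mathrm{TT}}+\|\mathcal{M}-\widehat{\mathcal{M}}\|_F\sum_{r_1=1}^{R_1}\sum_{r_2=1}^{R_2}\|\mathbf{H}\mathbf{A}^\star_{:r_1}\|_\infty\|\mathcal{B}^\star_{r_1:r_2}\|_F\|\mathbf{C}^\star_{r_2:}\|_F.$$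
   Context: Let $x(t)$, $t\in\mathbb{Z}$, be a complex-valued input signal and $y(t)$ a complex-valued output signal, $t_0\in\mathbb{Z}$. Define $\mathbf{y}=(y(t_0),\dots,y(t_0+N-1))^\top\in\mathbb{C}^N$; $\mathbf{H}\in\mathbb{C}^{N\times M_1}$ with entries $h_{ni}=x(t_0+n-i)$ ($n=0,\dots,N-1$, $i=0,\dots,M_1-1$); and $\mathcal{M}\in\mathbb{R}^{N\times M_2\times P}$ with entries $\mathcal{M}_{njp}=|x(t_0+n-j)|^p$ ($j=0,\dots,M_2-1$, $p=0,\dots,P-1$, with $0^0=1$). Mode-$k$ product of a tensor $\mathcal{X}\in\mathbb{C}^{I_1\times I_2\times I_3}$ with a matrix $\mathbf{Q}\in\mathbb{C}^{n\times I_k}$: replace mode $k$ by $n$ with $(\mathcal{X}\times_k\mathbf{Q})_{\dots j\dots}=\sum_{i_k}\mathcal{X}_{\dots i_k\dots}q_{j i_k}$ (no conjugation). Mode-$k$ product with a vector $\mathbf{v}\in\mathbb{C}^{I_k}$ contracts mode $k$: $(\mathcal{X}\times_k\mathbf{v})=\sum_{i_k}\mathcal{X}_{\dots i_k\dots}v_{i_k}$, removing that mode; in particular $(\mathcal{M}\times_2\mathbf{b}\times_3\mathbf{c})_n=\sum_{j,p}\mathcal{M}_{njp}b_jc_p$. $\mathbf{A}_{:r}$ is the $r$-th column and $\mathbf{C}_{r:}$ the $r$-th row (as a vector) of a matrix; $\mathcal{B}_{r_1:r_2}\in\mathbb{C}^{M_2}$ is the mode-2 fiber of $\mathcal{B}$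 with first index $r_1$ and third index $r_2$. $\odot$ is the entrywise (Hadamard) product; $\|\cdot\|_F$ is the Frobenius (Euclidean for vectors) norm; $\|\cdot\|_\infty$ is the maximum modulus of the entries of a vector. *)

(* Defs.v *)
From HB Require Import structures.
From mathcomp Require Import all_boot all_order all_algebra.
From mathcomp Require Import complex.
From mathcomp Require Import classical_sets reals.
Set Implicit Arguments. Unset Strict Implicit. Unset Printing Implicit Defensive.
Import Order.TTheory GRing.Theory Num.Theory.
Local Open Scope ring_scope.

Section Defs.
Variable R : realType.
Local Notation C := (complex R).

Definition rc (r : R) : C := Complex r 0.
Definition cabs (z : C) : R := Normc.normc z.

Definition yvec (N : nat) (y : int -> C) (t0 : int) : 'I_N -> C :=
  fun n => y (t0 + (n : nat)%:Z).

Definition Hmat (N M1 : nat) (x : int -> C) (t0 : int) : 'M[C]_(N, M1) :=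
  \matrix_(n < N, i < M1) x (t0 + (n : nat)%:Z - (i : nat)%:Z).

(* M_{n j p} = |x(t0 + n - j)|^p  (with 0^0 = 1) *)
Definition Mten (N M2 P : nat) (x : int -> C) (t0 : int) :
  'I_N -> 'I_M2 -> 'I_P -> R :=
  fun n j p => cabs (x (t0 + (n : nat)%:Z - (j : nat)%:Z)) ^+ (p : nat).

Definition mode23 (N J K : nat) (T : 'I_N -> 'I_J -> 'I_K -> R)
  (b : 'I_J -> C) (c : 'I_K -> C) : 'I_N -> C :=
  fun n => \sum_(j < J) \sum_(p < K) rc (T n j p) * b j * c p.

(* T x_2 Q2 x_3 Q3, with (T x_k Q)_{..j..} = sum_i T_{..i..} Q_{j i} *)
Definition mode23mat (N J K J' K' : nat) (T : 'I_N -> 'I_J -> 'I_K -> R)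
  (Q2 : 'M[R]_(J', J)) (Q3 : 'M[R]_(K', K)) : 'I_N -> 'I_J' -> 'I_K' -> R :=
  fun n j' p' => \sum_(j < J) \sum_(p < K) T n j p * Q2 j' j * Q3 p' p.

Definition model (N M1 J K R1 R2 : nat) (H : 'M[C]_(N, M1))
  (T : 'I_N -> 'I_J -> 'I_K -> R) (A : 'M[C]_(M1, R1))
  (B : 'I_R1 -> 'I_J -> 'I_R2 -> C) (Cm : 'M[C]_(R2, K)) : 'I_N -> C :=
  fun n => \sum_(r1 < R1) \sum_(r2 < R2)
     (H *m A) n r1 * mode23 T (fun j => B r1 j r2) (fun p => Cm r2 p) n.

Definition normFv (N : nat) (v : 'I_N -> C) : R :=
  Num.sqrt (\sum_(n < N) cabs (v n) ^+ 2).

Definition normF3 (N J K : nat) (T : 'I_N -> 'I_J -> 'I_K -> R) : R :=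
  Num.sqrt (\sum_(n < N) \sum_(j < J) \sum_(p < K) T n j p ^+ 2).

Definition normInf (N : nat) (v : 'I_N -> C) : R :=
  \big[Num.max/0]_(n < N) cabs (v n).

Definition residual (N M1 J K R1 R2 : nat) (yv : 'I_N -> C) (H : 'M[C]_(N, M1))
  (T : 'I_N -> 'I_J -> 'I_K -> R) (A : 'M[C]_(M1, R1))
  (B : 'I_R1 -> 'I_J -> 'I_R2 -> C) (Cm : 'M[C]_(R2, K)) : R :=
  normFv (fun n => yv n - model H T A B Cm n).

End Defs.

(* Main.v *)
Require Import Defs.
From HB Require Import structures.
From mathcomp Require Import all_boot all_order all_algebra.
From mathcomp Require Import complex.
From mathcomp Require Import classical_sets reals.
From mathcomp Require Import ring lra.
Import Order.TTheory GRing.Theory Num.Theory.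
Local Open Scope ring_scope.

Section Aux.
Variable R : realType.

Lemma CS2 (I : finType) (f g : I -> R) :
  (\sum_i f i * g i) ^+ 2 <= (\sum_i f i ^+ 2) * (\sum_i g i ^+ 2).
Proof.
have E : \sum_i \sum_j (f i * g j - f j * g i) ^+ 2 =
   (\sum_i f i ^+ 2) * (\sum_j g j ^+ 2) + (\sum_i g i ^+ 2) * (\sum_j f j ^+ 2)
   - 2 * ((\sum_i f i * g i) * (\sum_j f j * g j)).
  rewrite !big_distrlr /= mulr_sumr -big_split /= -sumrB.
  apply: eq_bigr => i _; rewrite mulr_sumr -big_split /= -sumrB.
  by apply: eq_bigr => j _; ring.
have : 0 <= \sum_i \sum_j (f i * g j - f j * g i) ^+ 2.
  by apply: sumr_ge0 => i _; apply: sumr_ge0 => j _; exact: sqr_ge0.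
rewrite E [(\sum_i g i ^+ 2) * _]mulrC. lra.
Qed.

Lemma CS (I : finType) (f g : I -> R) :
  \sum_i f i * g i <= Num.sqrt (\sum_i f i ^+ 2) * Num.sqrt (\sum_i g i ^+ 2).
Proof.
rewrite -sqrtrM; last by apply: sumr_ge0 => i _; exact: sqr_ge0.
apply: (le_trans (ler_norm _)).
by rewrite -sqrtr_sqr ler_sqrt ?CS2 // mulr_ge0 // sumr_ge0 // => i _; exact: sqr_ge0.
Qed.

Lemma cabs_ge0 (z : complex R) : 0 <= cabs z.
Proof. by case: z => a b; exact: sqrtr_ge0. Qed.

Lemma cabsD (a b : complex R) : cabs (a + b) <= cabs a + cabs b.
Proof. exact: le_normcD. Qed.

Lemma cabsM (a b : complex R) : cabs (a * b) = cabs a * cabs b.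
Proof. exact: Normc.normcM. Qed.

Lemma cabs_rc (r : R) : cabs (rc r) = `|r|.
Proof. by rewrite /cabs /= expr0n /= addr0 sqrtr_sqr. Qed.

Lemma cabs_sum (I : Type) (r : seq I) (P : pred I) (F : I -> complex R) :
  cabs (\sum_(i <- r | P i) F i) <= \sum_(i <- r | P i) cabs (F i).
Proof.
apply: (big_rec2 (fun a b => cabs a <= b)).
  by rewrite /cabs /= expr0n /= addr0 sqrtr0.
by move=> i a b _ H; apply: (le_trans (cabsD _ _)); rewrite lerD2l.
Qed.

Lemma eq_normFv (n : nat) (u v : 'I_n -> complex R) :
  (forall i, u i = v i) -> normFv u = normFv v.
Proof. by move=> E; rewrite /normFv; congr Num.sqrt; apply: eq_bigr => i _; rewrite E. Qed.

Lemma normFv_ge0 (n : nat) (u : 'I_n -> complex R) : 0 <= normFv u.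
Proof. exact: sqrtr_ge0. Qed.

Lemma normFvD (n : nat) (u v : 'I_n -> complex R) :
  normFv (fun i => u i + v i) <= normFv u + normFv v.
Proof.
have Y0 : 0 <= normFv u + normFv v by rewrite addr_ge0 // normFv_ge0.
rewrite {2}/normFv -[normFv u + normFv v]ger0_norm // -sqrtr_sqr ler_sqrt ?sqr_ge0 //.
have Su : 0 <= \sum_i cabs (u i) ^+ 2 by apply: sumr_ge0 => i _; exact: sqr_ge0.
have Sv : 0 <= \sum_i cabs (v i) ^+ 2 by apply: sumr_ge0 => i _; exact: sqr_ge0.
rewrite /normFv sqrrD !sqr_sqrtr //.
apply: (@le_trans _ _ (\sum_i (cabs (u i) + cabs (v i)) ^+ 2)).
  apply: ler_sum => i _; apply: lerXn2r; rewrite ?nnegrE ?addr_ge0 ?cabs_ge0 //.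
  exact: cabsD.
under eq_bigr do rewrite sqrrD.
rewrite big_split big_split /=.
rewrite sumrMnl; apply: lerD => //; apply: lerD => //.
rewrite lerMn2r /=; exact: (CS _ (fun i => cabs (u i)) (fun i => cabs (v i))).
Qed.

Lemma normFv0 (n : nat) : normFv (fun _ : 'I_n => 0 : complex R) = 0.
Proof.
rewrite /normFv big1 ?sqrtr0 // => i _.
by rewrite /cabs /= expr0n /= addr0 sqrtr0 expr0n.
Qed.

Lemma normFv_sum (n : nat) (I : Type) (r : seq I) (P : pred I)
  (F : I -> 'I_n -> complex R) :
  normFv (fun k => \sum_(i <- r | P i) F i k) <= \sum_(i <- r | P i) normFv (F i).
Proof.
elim: r => [|a r IH].
  by rewrite big_nil (@eq_normFv _ _ (fun _ => 0)) ?normFv0 // => k; rewrite big_nil.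
rewrite big_cons; case: ifP => Pa.
  rewrite (@eq_normFv _ _ (fun k => F a k + \sum_(i <- r | P i) F i k)); last first.
    by move=> k; rewrite big_cons Pa.
  by apply: (le_trans (normFvD _ (F a) (fun k => \sum_(i <- r | P i) F i k))); rewrite lerD2l.
rewrite (@eq_normFv _ _ (fun k => \sum_(i <- r | P i) F i k)) //.
by move=> k; rewrite big_cons Pa.
Qed.

Lemma normInf_ge (n : nat) (h : 'I_n -> complex R) i : cabs (h i) <= normInf h.
Proof.
rewrite /normInf.
have : i \in index_enum 'I_n by rewrite mem_index_enum.
elim: (index_enum 'I_n) => [//|a s IH].
rewrite big_cons in_cons => /orP [/eqP ->|/IH H]; rewrite le_max ?lexx //.
by rewrite H orbT.
Qed.

Lemma normInf_ge0 (n : nat) (h : 'I_n -> complex R) : 0 <= normInf h.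
Proof.
rewrite /normInf; apply: (big_rec (fun a => 0 <= a)) => // i a _ H.
by rewrite le_max H orbT.
Qed.

Lemma sum_sqr_ge0 (I : finType) (f : I -> R) : 0 <= \sum_i f i ^+ 2.
Proof. by apply: sumr_ge0 => i _; exact: sqr_ge0. Qed.

Lemma sum2_sqr_ge0 (I J : finType) (f : I -> J -> R) : 0 <= \sum_i \sum_j f i j ^+ 2.
Proof. by apply: sumr_ge0 => i _; exact: sum_sqr_ge0. Qed.

Lemma sum3_sqr_ge0 (I J K : finType) (f : I -> J -> K -> R) :
  0 <= \sum_i \sum_j \sum_k f i j k ^+ 2.
Proof. by apply: sumr_ge0 => i _; exact: sum2_sqr_ge0. Qed.

Lemma normFv_scale (n : nat) (h w : 'I_n -> complex R) :
  normFv (fun k => h k * w k) <= normInf h * normFv w.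
Proof.
have h0 := normInf_ge0 _ h.
rewrite /normFv -[normInf h]ger0_norm // -sqrtr_sqr -sqrtrM ?sqr_ge0 //.
rewrite ler_sqrt ?mulr_ge0 ?sqr_ge0 ?sum_sqr_ge0 //.
rewrite big_distrr /=.
apply: ler_sum => i _; rewrite cabsM exprMn ler_wpM2r ?sqr_ge0 //.
by apply: lerXn2r; rewrite ?nnegrE ?cabs_ge0 ?normInf_ge0 ?normInf_ge.
Qed.

Lemma cabs_mode23 (N J K : nat) (T : 'I_N -> 'I_J -> 'I_K -> R)
  (b : 'I_J -> complex R) (c : 'I_K -> complex R) n :
  cabs (mode23 T b c n) <=
  Num.sqrt (\sum_j \sum_p T n j p ^+ 2) * normFv b * normFv c.
Proof.
rewrite /mode23; apply: (le_trans (cabs_sum _ _ _ _)).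
apply: (@le_trans _ _ (\sum_j cabs (b j) * (Num.sqrt (\sum_p T n j p ^+ 2) * normFv c))).
  apply: ler_sum => j _; apply: (le_trans (cabs_sum _ _ _ _)).
  under eq_bigr do rewrite !cabsM cabs_rc -mulrA [cabs (b j) * _]mulrC mulrA.
  rewrite -mulr_suml [cabs (b j) * _]mulrC ler_wpM2r ?cabs_ge0 //.
  have := CS _ (fun p => `|T n j p|) (fun p => cabs (c p)); rewrite /normFv.
  rewrite (@eq_bigr _ _ _ _ _ _ (fun p => `|T n j p| ^+ 2) (fun p => T n j p ^+ 2)) //.
  by move=> p _; rewrite real_normK ?num_real.
under eq_bigr do rewrite mulrA.
rewrite -mulr_suml ler_wpM2r ?normFv_ge0 //.
have := CS _ (fun j => cabs (b j)) (fun j => Num.sqrt (\sum_p T n j p ^+ 2)).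
rewrite [_ * normFv b]mulrC /normFv.
rewrite (@eq_bigr _ _ _ _ _ _ (fun j => Num.sqrt (\sum_p T n j p ^+ 2) ^+ 2) (fun j => \sum_p T n j p ^+ 2)) //.
by move=> j _; rewrite sqr_sqrtr ?sum_sqr_ge0.
Qed.

Lemma normFv_mode23 (N J K : nat) (T : 'I_N -> 'I_J -> 'I_K -> R)
  (b : 'I_J -> complex R) (c : 'I_K -> complex R) :
  normFv (mode23 T b c) <= normF3 T * normFv b * normFv c.
Proof.
have P0 : 0 <= normFv b * normFv c by rewrite mulr_ge0 ?normFv_ge0.
rewrite -mulrA /normF3 -[normFv b * _]ger0_norm // -sqrtr_sqr -sqrtrM; last first.
  exact: sum3_sqr_ge0.
rewrite /normFv ler_sqrt; last by rewrite mulr_ge0 ?sqr_ge0 // sum3_sqr_ge0.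
rewrite mulr_suml; apply: ler_sum => i _.
rewrite -[_ * _ ^+ 2]sqr_sqrtr ?sum2_sqr_ge0 //; last first.
  by rewrite mulr_ge0 ?sqr_ge0 // sum2_sqr_ge0.
rewrite sqrtrM; last exact: sum2_sqr_ge0.
rewrite sqrtr_sqr ger0_norm // mulrA.
apply: lerXn2r; rewrite ?nnegrE ?cabs_ge0 ?mulr_ge0 ?sqrtr_ge0 ?normFv_ge0 //.
exact: cabs_mode23.
Qed.

Definition Tm (N J K : nat) (T : 'I_N -> 'I_J -> 'I_K -> R) n : 'M[complex R]_(J, K) :=
  \matrix_(j, p) rc (T n j p).
Arguments Tm {N J K} T n.

Lemma mode23_mx (N J K : nat) (T : 'I_N -> 'I_J -> 'I_K -> R)
  (b : 'I_J -> complex R) (c : 'I_K -> complex R) n :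
  mode23 T b c n = ((\row_j b j) *m Tm T n *m (\col_p c p)) 0 0.
Proof.
rewrite /mode23 mxE exchange_big /=; apply: eq_bigr => p _.
rewrite !mxE big_distrl /=; apply: eq_bigr => j _.
by rewrite /Tm !mxE [rc _ * _]mulrC.
Qed.

Lemma mode23mat_mx (N J K J' K' : nat) (T : 'I_N -> 'I_J -> 'I_K -> R)
  (Q2 : 'M[R]_(J', J)) (Q3 : 'M[R]_(K', K)) n :
  Tm (mode23mat T Q2 Q3) n =
  map_mx (real_complex R) Q2 *m Tm T n *m (map_mx (real_complex R) Q3)^T.
Proof.
apply/matrixP => j' p'; rewrite /Tm !mxE /mode23mat.
change (rc ?x) with (real_complex R x).
rewrite (rmorph_sum (real_complex R)); under eq_bigr do rewrite (rmorph_sum (real_complex R)).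
rewrite exchange_big /=; apply: eq_bigr => p _.
rewrite !mxE big_distrl /=; apply: eq_bigr => j _.
rewrite !mxE !rmorphM /=. ring.
Qed.

Lemma proj_id (N M2 P Mt2 Pt : nat) (T : 'I_N -> 'I_M2 -> 'I_P -> R)
  (U2 : 'M[R]_(M2, Mt2)) (U3 : 'M[R]_(P, Pt))
  (b : 'I_M2 -> complex R) (c : 'I_P -> complex R) n :
  mode23 (mode23mat T U2^T U3^T)
    (fun j' => ((\row_j b j) *m map_mx (real_complex R) U2) 0 j')
    (fun p' => ((\row_p c p) *m map_mx (real_complex R) U3) 0 p') n
  = mode23 (mode23mat T (U2 *m U2^T) (U3 *m U3^T)) b c n.
Proof.
rewrite !mode23_mx !mode23mat_mx.
set u := map_mx (real_complex R) U2; set v := map_mx (real_complex R) U3.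
have -> : \row_j' ((\row_j b j) *m u) 0 j' = (\row_j b j) *m u.
  by apply/matrixP => i k; rewrite mxE (ord1 i).
have -> : \col_p' ((\row_p c p) *m v) 0 p' = v^T *m (\col_p c p).
  apply/matrixP => i k; rewrite (ord1 k) !mxE; apply: eq_bigr => p _.
  by rewrite !mxE mulrC.
rewrite !map_mxM !map_trmx -/u -/v trmx_mul trmxK !mulmxA.
rewrite ?map_trmx ?trmxK -/u -/v.
by [].
Qed.

Lemma eq_mode23 (N J K : nat) (T : 'I_N -> 'I_J -> 'I_K -> R)
  (b b' : 'I_J -> complex R) (c c' : 'I_K -> complex R) n :
  (forall j, b j = b' j) -> (forall p, c p = c' p) ->
  mode23 T b c n = mode23 T b' c' n.
Proof.
move=> Eb Ec; rewrite /mode23; apply: eq_bigr => j _; apply: eq_bigr => p _.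
by rewrite Eb Ec.
Qed.

Lemma mode23B (N J K : nat) (T T' : 'I_N -> 'I_J -> 'I_K -> R)
  (b : 'I_J -> complex R) (c : 'I_K -> complex R) n :
  mode23 T b c n - mode23 T' b c n = mode23 (fun n j p => T n j p - T' n j p) b c n.
Proof.
rewrite /mode23 -sumrB; apply: eq_bigr => j _; rewrite -sumrB; apply: eq_bigr => p _.
change (rc ?x) with (real_complex R x).
by rewrite rmorphB /= !mulrBl.
Qed.

End Aux.

Local Open Scope classical_set_scope.

Theorem theorem2 (R : realType) (N M1 M2 P R1 R2 Mt2 Pt : nat)
  (x y : int -> complex R) (t0 : int)
  (U2 : 'M[R]_(M2, Mt2)) (U3 : 'M[R]_(P, Pt))
  (Astar : 'M[complex R]_(M1, R1))
  (Bstar : 'I_R1 -> 'I_M2 -> 'I_R2 -> complex R)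
  (Cstar : 'M[complex R]_(R2, P)) :
  (0 < N)%N -> (0 < M1)%N -> (0 < M2)%N -> (0 < P)%N ->
  (0 < R1)%N -> (0 < R2)%N -> (0 < Mt2)%N -> (0 < Pt)%N ->
  (Mt2 <= M2)%N -> (Pt <= P)%N ->
  U2^T *m U2 = 1%:M -> U3^T *m U3 = 1%:M ->
  let yv := @yvec R N y t0 in
  let H := @Hmat R N M1 x t0 in
  let Mt := @Mten R N M2 P x t0 in
  let Mtil := mode23mat Mt U2^T U3^T in
  let Mhat := mode23mat Mt (U2 *m U2^T) (U3 *m U3^T) in
  (forall (A : 'M[complex R]_(M1, R1))
          (B : 'I_R1 -> 'I_M2 -> 'I_R2 -> complex R)
          (Cm : 'M[complex R]_(R2, P)),
      residual yv H Mt Astar Bstar Cstar <= residual yv H Mt A B Cm) ->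
  inf [set r : R | exists (A : 'M[complex R]_(M1, R1))
                          (Bt : 'I_R1 -> 'I_Mt2 -> 'I_R2 -> complex R)
                          (Ct : 'M[complex R]_(R2, Pt)),
                     r = residual yv H Mtil A Bt Ct]
  <= residual yv H Mt Astar Bstar Cstar
     + normF3 (fun n j p => Mt n j p - Mhat n j p)
       * \sum_(r1 < R1) \sum_(r2 < R2)
           (normInf (fun n => (H *m Astar) n r1)
            * normFv (fun j => Bstar r1 j r2)
            * normFv (fun p => Cstar r2 p)).
Proof.
move=> _ _ _ _ _ _ _ _ _ _ _ _ yv H Mt Mtil Mhat _.
set Bt := fun r1 (j' : 'I_Mt2) r2 =>
  ((\row_j Bstar r1 j r2) *m map_mx (real_complex R) U2) 0 j'.
set Ct := \matrix_(r2 < R2, p' < Pt)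
  ((\row_p Cstar r2 p) *m map_mx (real_complex R) U3) 0 p'.
set S := [set r : R | _].
have lb : has_lbound S.
  by exists 0 => r [A [B' [C' ->]]]; exact: normFv_ge0.
have mem : S (residual yv H Mtil Astar Bt Ct) by exists Astar, Bt, Ct.
apply: (le_trans (ge_inf lb mem)).
set D := fun n j p => Mt n j p - Mhat n j p.
have Emod : forall n, model H Mtil Astar Bt Ct n =
    model H Mhat Astar Bstar Cstar n.
  move=> n; rewrite /model; apply: eq_bigr => r1 _; apply: eq_bigr => r2 _.
  congr (_ * _); rewrite -proj_id; apply: eq_mode23 => // p.
  by rewrite /Ct mxE.
rewrite /residual (@eq_normFv _ _ _ (fun n =>
   (yv n - model H Mt Astar Bstar Cstar n) +
   (model H Mt Astar Bstar Cstar n - model H Mhat Astar Bstar Cstar n))); last first.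
  by move=> n; rewrite Emod addrA subrK.
apply: (le_trans (normFvD _ _ _ _)); rewrite lerD2l.
rewrite (@eq_normFv _ _ _ (fun n => \sum_(r1 < R1) \sum_(r2 < R2)
   (H *m Astar) n r1 * mode23 D (fun j => Bstar r1 j r2) (fun p => Cstar r2 p) n)); last first.
  move=> n; rewrite /model -sumrB; apply: eq_bigr => r1 _; rewrite -sumrB.
  by apply: eq_bigr => r2 _; rewrite -mulrBr mode23B.
apply: (le_trans (normFv_sum _ _ _ _ _ _)).
rewrite mulr_sumr; apply: ler_sum => r1 _.
apply: (le_trans (normFv_sum _ _ _ _ _ _)).
rewrite mulr_sumr; apply: ler_sum => r2 _.
apply: (le_trans (normFv_scale _ _ _ _)).
have := @normFv_mode23 _ _ _ _ D (fun j => Bstar r1 j r2) (fun p => Cstar r2 p).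
move=> h; apply: (le_trans (ler_wpM2l (normInf_ge0 _ _ _) h)).
by rewrite !mulrA [normInf _ * _]mulrC.
Qed.
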